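(* Let $f_1,\dots,f_T\in\mathcal F_X(\alpha,l,G)$. Online gradient descent (OGD) with stepsize $\gamma=1/l$ is defined by $$x_1=x_0,\qquad x_t=\Pi_X\big(x_{t-1}-\gamma\nabla f_{t-1}(x_{t-1})\big)\quad\text{for }2\le t\le T.$$ Its dynamic regret satisfies $\mathrm{Reg}(\mathrm{OGD},\mathcal L_T(L_T,\mathcal F_X(\alpha,l,G)))\le \delta L_T$, where $\delta=(\beta/l+1)\frac{G}{1-\kappa}$ and $\kappa=\sqrt{1-\alpha/l}$.
   Context: Setting: $X\subseteq\mathbb R^n$ is nonempty, compact and convex with diameter $D$. The parameter $\beta\ge0$, the initial point $x_0\in X$ and the horizon $T\ge1$ are fixed, and $\Pi_X$ is Euclidean projection onto $X$. Function class: for $0<\alpha\le l$ and $G>0$, $\mathcal F_X(\alpha,l,G)$ is the set of differentiable $f:\mathbb R^n\to\mathbb R$ that are $\alpha$-strongly convex and $l$-smooth on $\mathbb R^n$, meaning $$f(x)+\langle\nabla f(x),y-x\rangle+\tfrac\alpha2\|y-x\|^2\le f(y)\le f(x)+\langle\nabla f(x),y-x\rangle+\tfrac l2\|y-x\|^2,$$ and that satisfy $\|\nabla f\|\le G$ on $X$. Total cost: $C_1^T(x)=\sum_{t=1}^T(f_t(x_t)+\frac\beta2\|x_t-x_{t-1}\|^2)$. Path length: $\theta_t=\arg\min_X f_t$ and $\theta_0=x_0$. For $0\le L_T\le DT$, $\mathcal L_T(L_T,\mathcal F_X(\alpha,l,G))$ is the set of sequences $\{f_t\}_{t=1}^T\subseteq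 \mathcal F_X(\alpha,l,G)$ with $\sum_{t=1}^T\|\theta_t-\theta_{t-1}\|\le L_T$. Dynamic regret: $\mathrm{Reg}(\mathcal A,\mathcal L_T)=\sup_{\{f_t\}\in\mathcal L_T}\big(C_1^T(x^{\mathcal A})-\min_{x\in X^T}C_1^T(x)\big)$, where $x^{\mathcal A}$ is the output of the algorithm and $x^{\mathcal A}_0=x_0$. *)

(* Defs.v *)
(* R^n is modelled as row vectors 'rV[R]_n over R : realType,
   equipped with the Euclidean inner product / norm defined below. *)
From HB Require Import structures.
From mathcomp Require Import all_boot all_order all_algebra.
From mathcomp Require Import all_classical all_reals all_analysis.
Set Implicit Arguments. Unset Strict Implicit. Unset Printing Implicit Defensive.
Import Order.TTheory GRing.Theory Num.Theory.
Import numFieldNormedType.Exports.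
Local Open Scope classical_set_scope.
Local Open Scope ring_scope.

Section Defs.
Variables (R : realType) (n : nat).
Local Notation V := 'rV[R]_n.

Definition dotp (u v : V) : R := \sum_(i < n) u ord0 i * v ord0 i.
Definition enorm (v : V) : R := Num.sqrt (dotp v v).

Definition grad (f : V -> R) (x : V) : V :=
  \row_(i < n) derive f x (delta_mx ord0 i : V).

Definition diam (X : set V) : R := sup [set enorm (x - y) | x in X & y in X].

Definition proj (X : set V) (x : V) : V :=
  xget 0 [set p | X p /\ forall q, X q -> enorm (x - p) <= enorm (x - q)].

Definition argmin (X : set V) (f : V -> R) : V :=
  xget 0 [set p | X p /\ forall q, X q -> f p <= f q].

Definition in_class (X : set V) (alpha l G : R) (f : V -> R) : Prop :=
  (forall x, differentiable f x) /\
  (forall x y,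
      f x + dotp (grad f x) (y - x) + alpha / 2 * enorm (y - x) ^+ 2 <= f y /\
      f y <= f x + dotp (grad f x) (y - x) + l / 2 * enorm (y - x) ^+ 2) /\
  (forall x, X x -> enorm (grad f x) <= G).

Definition theta (X : set V) (x0 : V) (f : nat -> V -> R) (t : nat) : V :=
  if t is 0 then x0 else argmin X (f t).

Definition path_length (X : set V) (x0 : V) (f : nat -> V -> R) (T : nat) : R :=
  \sum_(1 <= t < T.+1) enorm (theta X x0 f t - theta X x0 f t.-1).

(* total cost C_1^T(x); the sequence x is indexed from 0, with x 0 the initial point *)
Definition cost (beta : R) (f : nat -> V -> R) (T : nat) (x : nat -> V) : R :=
  \sum_(1 <= t < T.+1) (f t (x t) + beta / 2 * enorm (x t - x t.-1) ^+ 2).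

Fixpoint ogd (X : set V) (gamma : R) (x0 : V) (f : nat -> V -> R) (t : nat) : V :=
  match t with
  | 0 => x0
  | 1 => x0
  | (s.+1) as t' =>
      let p := ogd X gamma x0 f s in
      proj X (p - gamma *: grad (f s) p)
  end.

End Defs.

(* Main.v *)
Require Import Defs.
From HB Require Import structures.
From mathcomp Require Import all_boot all_order all_algebra.
From mathcomp Require Import all_classical all_reals all_analysis.
From mathcomp Require Import ring lra.
Import Order.TTheory GRing.Theory Num.Theory.
Import numFieldNormedType.Exports.
Local Open Scope classical_set_scope.
Local Open Scope ring_scope.
Set Implicit Arguments.
Section Basic.
Variables (R : realType) (n : nat).
Local Notation V := 'rV[R]_n.
Implicit Types u v w : V.

Lemma dotpC u v : dotp u v = dotp v u.
Proof. by apply: eq_bigr => i _; rewrite mulrC. Qed.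

Lemma dotpDl u v w : dotp (u + v) w = dotp u w + dotp v w.
Proof. by rewrite /dotp -big_split; apply: eq_bigr => i _; rewrite mxE mulrDl. Qed.

Lemma dotpNl u w : dotp (- u) w = - dotp u w.
Proof. by rewrite /dotp -sumrN; apply: eq_bigr => i _; rewrite mxE mulNr. Qed.

Lemma dotpZl (a : R) u w : dotp (a *: u) w = a * dotp u w.
Proof. by rewrite /dotp mulr_sumr; apply: eq_bigr => i _; rewrite mxE mulrA. Qed.

Lemma dotpBl u v w : dotp (u - v) w = dotp u w - dotp v w.
Proof. by rewrite dotpDl dotpNl. Qed.

Lemma dotpDr u v w : dotp w (u + v) = dotp w u + dotp w v.
Proof. by rewrite dotpC dotpDl !(dotpC w). Qed.

Lemma dotpBr u v w : dotp w (u - v) = dotp w u - dotp w v.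
Proof. by rewrite dotpC dotpBl !(dotpC w). Qed.

Lemma dotpNr u w : dotp w (- u) = - dotp w u.
Proof. by rewrite dotpC dotpNl dotpC. Qed.

Lemma dotpZr (a : R) u w : dotp w (a *: u) = a * dotp w u.
Proof. by rewrite dotpC dotpZl dotpC. Qed.

Lemma dotp_ge0 v : 0 <= dotp v v.
Proof. by apply: sumr_ge0 => i _; rewrite -expr2 sqr_ge0. Qed.

Lemma dotp_eq0 v : dotp v v = 0 -> v = 0.
Proof.
move=> h; apply/rowP => i; rewrite mxE.
have hp : forall j, predT j -> 0 <= v ord0 j * v ord0 j.
  by move=> j _; rewrite -expr2 sqr_ge0.
have /eqP := @psumr_eq0P _ _ predT (fun i => v ord0 i * v ord0 i) hp h i isT.
by rewrite mulf_eq0 orbb => /eqP.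
Qed.

Lemma enorm_ge0 v : 0 <= enorm v.
Proof. exact: sqrtr_ge0. Qed.

Lemma enorm_sq v : enorm v ^+ 2 = dotp v v.
Proof. by rewrite /enorm sqr_sqrtr // dotp_ge0. Qed.

Lemma dotp0l v : dotp 0 v = 0.
Proof. by rewrite /dotp big1 // => i _; rewrite mxE mul0r. Qed.

Lemma enorm0 : enorm (0 : V) = 0.
Proof. by rewrite /enorm dotp0l sqrtr0. Qed.

Lemma CS u v : dotp u v <= enorm u * enorm v.
Proof.
have [a0|a0] := eqVneq (enorm u) 0.
  have : dotp u u = 0 by rewrite -enorm_sq a0 expr0n.
  by move/dotp_eq0 => ->; rewrite dotp0l enorm0 mul0r.
have [b0|b0] := eqVneq (enorm v) 0.
  have : dotp v v = 0 by rewrite -enorm_sq b0 expr0n.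
  by move/dotp_eq0 => ->; rewrite dotpC dotp0l enorm0 mulr0.
have ha : 0 < enorm u by rewrite lt_def a0 enorm_ge0.
have hb : 0 < enorm v by rewrite lt_def b0 enorm_ge0.
have := dotp_ge0 (enorm v *: u - enorm u *: v).
rewrite !(dotpBl, dotpBr, dotpZl, dotpZr) -!enorm_sq (dotpC v u).
set a := enorm u; set b := enorm v; set c := dotp u v => h.
have hab : 0 < a * b by rewrite mulr_gt0.
rewrite -subr_ge0.
have : 0 <= (a * b) * (2 * (a * b - c)).
  by move: h; rewrite -subr_ge0; congr (0 <= _); ring.
rewrite pmulr_rge0 // pmulr_rge0 //.
Qed.

Lemma CSabs u v : `|dotp u v| <= enorm u * enorm v.
Proof.
rewrite ler_norml CS andbT lerNl -dotpNl.
have -> : enorm u = enorm (- u) by rewrite /enorm dotpNl dotpC dotpNl opprK.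
exact: CS.
Qed.

Lemma enormD u v : enorm (u + v) <= enorm u + enorm v.
Proof.
rewrite /enorm -(ger0_norm (addr_ge0 (sqrtr_ge0 (dotp u u)) (sqrtr_ge0 (dotp v v)))).
rewrite -sqrtr_sqr ler_sqrt ?sqr_ge0 //.
rewrite !(dotpDl, dotpDr) sqrrD !sqr_sqrtr ?dotp_ge0 // (dotpC v u).
have := CS u v; rewrite /enorm; lra.
Qed.

Lemma enormB u v : enorm (u - v) = enorm (v - u).
Proof. by rewrite /enorm !(dotpBl, dotpBr) (dotpC u v); congr Num.sqrt; ring. Qed.

Lemma enormZ (a : R) u : enorm (a *: u) = `|a| * enorm u.
Proof. by rewrite /enorm dotpZl dotpZr mulrA sqrtrM ?sqr_ge0 // -expr2 sqrtr_sqr. Qed.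


Lemma dotp_cont (z : V) : continuous (fun x : V => dotp (z - x) (z - x)).
Proof.
rewrite /dotp.
apply: (continuous_big add_continuous) => i _.
have hc : continuous (fun x : V => (z - x) ord0 i).
  move=> x; apply: (@continuous_comp _ _ _ (fun x : V => z - x) (fun M : V => M ord0 i)).
    by apply: (@continuousB _ _ _ (cst z) id); [exact: cst_continuous| by move=> y; exact: cvg_id].
  exact: coord_continuous.
by move=> x; apply: (@continuousM _ _ (fun x : V => (z - x) ord0 i) (fun x : V => (z - x) ord0 i)); apply: hc.
Qed.

Lemma argmin_spec (X : set V) (f : V -> R) :
  X !=set0 -> compact X -> continuous f ->
  X (argmin X f) /\ forall q, X q -> f (argmin X f) <= f q.
Proof.
move=> X0 cX cf; rewrite /argmin.
suff hex : exists c, X c /\ forall q, X q -> f c <= f q.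
  exact: (@xgetPex _ 0 [set p | X p /\ forall q, X q -> f p <= f q] hex).
have [c cX' h] := compact_EVT_min X0 cX (continuous_subspaceT cf).
exists c; split; first by rewrite inE in cX'.
by move=> q Xq; apply: h; rewrite inE.
Qed.

Lemma proj_min (X : set V) (z : V) :
  X !=set0 -> compact X ->
  X (Defs.proj X z) /\ forall q, X q -> enorm (z - Defs.proj X z) <= enorm (z - q).
Proof.
move=> X0 cX; rewrite /Defs.proj.
suff hex : exists c, X c /\ forall q, X q -> enorm (z - c) <= enorm (z - q).
  exact: (@xgetPex _ 0 [set p | X p /\ forall q, X q -> enorm (z - p) <= enorm (z - q)] hex).
have [c cX' h] := compact_EVT_min X0 cX (continuous_subspaceT (@dotp_cont z)).
exists c; split; first by rewrite inE in cX'.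
by move=> q Xq; rewrite /enorm ler_sqrt ?dotp_ge0 //; apply: h; rewrite inE.
Qed.

Lemma quad_aux (a b : V) lam :
  dotp a a <= dotp (a - lam *: b) (a - lam *: b) -> 0 < lam ->
  2 * dotp a b <= lam * dotp b b.
Proof.
have e : dotp (a - lam *: b) (a - lam *: b) =
  dotp a a - 2 * lam * dotp a b + lam ^+ 2 * dotp b b.
  by rewrite !(dotpBl, dotpBr, dotpZl, dotpZr) (dotpC b a); ring.
rewrite e => h lp.
rewrite -(ler_pM2l lp) -subr_ge0.
have -> : lam * (lam * dotp b b) - lam * (2 * dotp a b) =
  (dotp a a - 2 * lam * dotp a b + lam ^+ 2 * dotp b b) - dotp a a by ring.
by rewrite subr_ge0.
Qed.

Lemma proj_var (X : set V) (z : V) :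
  X !=set0 -> compact X -> convex_set X ->
  X (Defs.proj X z) /\ forall q, X q -> dotp (z - Defs.proj X z) (q - Defs.proj X z) <= 0.
Proof.
move=> X0 cX cvX; have [Xp hp] := proj_min z X0 cX; split => // q Xq.
set p := Defs.proj X z in Xp hp *.
set c := dotp (z - p) (q - p); set N := dotp (q - p) (q - p).
have hN : 0 <= N by apply: dotp_ge0.
rewrite leNgt; apply/negP => c0.
pose lam := c / (N + c).
have l0 : 0 <= lam by apply: divr_ge0; [exact: ltW | rewrite addr_ge0 // ltW].
have l1 : lam <= 1 by rewrite ler_pdivrMr ?mul1r ?lerDr // ltr_wpDl.
have Xw : X (lam *: q + (1 - lam) *: p).
  have := cvX q p (Itv01 l0 l1); rewrite !inE; apply => //.
have := hp _ Xw.
rewrite /enorm ler_sqrt ?dotp_ge0 //.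
have -> : z - (lam *: q + (1 - lam) *: p) = (z - p) - lam *: (q - p).
  by apply/rowP => i; rewrite !mxE; ring.
have lp : 0 < lam by rewrite divr_gt0 // ltr_wpDl.
move=> /quad_aux /(_ lp); rewrite -/c -/N => h2.
have : lam * N <= c.
  rewrite /lam mulrAC ler_pdivrMr ?ltr_wpDl //.
  by rewrite mulrDr lerDl mulr_ge0 // ltW.
move: c0 h2; lra.
Qed.

Lemma cont_of_class (X : set V) alpha l G f :
  in_class X alpha l G f -> continuous f.
Proof. by move=> [hd _] y; apply: differentiable_continuous; exact: hd. Qed.

Lemma gd_step (X : set V) (f : V -> R) alpha l G x :
  X !=set0 -> compact X -> convex_set X -> 0 < alpha -> alpha <= l ->
  in_class X alpha l G f -> X x ->
  enorm (Defs.proj X (x - l^-1 *: grad f x) - argmin X f)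
    <= Num.sqrt (1 - alpha / l) * enorm (x - argmin X f) /\
  enorm (Defs.proj X (x - l^-1 *: grad f x) - x) ^+ 2
    <= 2 * G / l * enorm (x - argmin X f).
Proof.
move=> X0 cX cvX a0 al hf Xx.
have l0 : 0 < l by apply: lt_le_trans al.
have [Xth thmin] := argmin_spec X0 cX (cont_of_class hf).
have [Xxp pv] := proj_var (x - l^-1 *: grad f x) X0 cX cvX.
move: Xth thmin Xxp pv.
set th := argmin X f; set g := grad f x; set xp := Defs.proj X _.
move=> Xth thmin Xxp pv.
have [_ [ineq gb]] := hf.
have S := (ineq x xp).2.
have C := (ineq x th).1.
have M := thmin _ Xxp.
have Pth := pv _ Xth.
have Px := pv _ Xx.
have ea : th - x = - (x - th) by rewrite opprB.
have ed : xp - x = - (x - xp) by rewrite opprB.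
have ez : x - l^-1 *: g - xp = (x - xp) - l^-1 *: g.
  by apply/rowP => i; rewrite !mxE; ring.
have eth : th - xp = (x - xp) - (x - th).
  by apply/rowP => i; rewrite !mxE; ring.
have exth : xp - th = (x - th) - (x - xp).
  by apply/rowP => i; rewrite !mxE; ring.
rewrite -/g ea ed !enorm_sq in C S; rewrite ed.
rewrite ez eth in Pth; rewrite ez in Px.
rewrite exth.
move: Pth Px C S M.
have hg : enorm g <= G by apply: gb.
move: hg.
have csgd := CS g (x - xp).
have csda := CS (x - xp) (x - th).
move: csgd csda.
move: (x - xp) (x - th) => d a.
rewrite !(dotpBl, dotpBr, dotpZl, dotpZr, dotpNl, dotpNr, opprK) ?(dotpC d g) ?(dotpC a g) ?(dotpC a d).
rewrite enorm_sq.
move=> csgd csda hg Pth Px C S M.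
have lne : l != 0 by rewrite gt_eqF.
have al1 : alpha / l <= 1 by rewrite ler_pdivrMr // mul1r.
have l1 : 0 <= 1 - alpha / l by rewrite subr_ge0.
have Pl : l * dotp d d - dotp g d - (l * dotp d a - dotp g a) <= 0.
  have -> : l * dotp d d - dotp g d - (l * dotp d a - dotp g a) =
    l * (dotp d d - l^-1 * dotp g d - (dotp d a - l^-1 * dotp g a)) by field.
  by rewrite pmulr_rle0.
have Pxl : l * dotp d d - dotp g d <= 0.
  have -> : l * dotp d d - dotp g d = l * (dotp d d - l^-1 * dotp g d) by field.
  by rewrite pmulr_rle0.
have key0 : alpha * dotp a a + l * dotp d d <= 2 * l * dotp d a.
  have -> : alpha * dotp a a = 2 * (alpha / 2 * dotp a a) by field.
  lra.
have key : alpha / l * dotp a a + dotp d d <= 2 * dotp d a.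
  rewrite -(ler_pM2l l0).
  have -> : l * (alpha / l * dotp a a + dotp d d) = alpha * dotp a a + l * dotp d d by field.
  lra.
have aa0 := dotp_ge0 a.
split.
  rewrite /enorm -sqrtrM // ler_sqrt ?mulr_ge0 //.
  rewrite !(dotpBl, dotpBr) (dotpC a d).
  have : 0 <= alpha / l * dotp a a by rewrite mulr_ge0 // divr_ge0 // ltW.
  lra.
rewrite dotpNl dotpNr opprK.
have na0 := enorm_ge0 a; have nd0 := enorm_ge0 d; have ng0 := enorm_ge0 g.
have eaa := enorm_sq a; have edd := enorm_sq d.
have h2 : 0 <= alpha / l * dotp a a by rewrite mulr_ge0 // divr_ge0 // ltW.
move: csgd csda hg Pxl key h2 eaa edd na0 nd0 ng0.
move: (enorm a) (enorm d) (enorm g) (dotp a a) (dotp d d) (dotp d a) (dotp g a) (dotp g d)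
  => na nd ng aa dd da ga gd csgd csda hg Pxl key h2 eaa edd na0 nd0 ng0.
rewrite -(ler_pM2l l0).
have -> : l * (2 * G / l * na) = 2 * G * na by field.
rewrite -edd.
have [nd00|ndp] := eqVneq nd 0.
  rewrite nd00 expr0n /= mulr0 mulr_ge0 // mulr_ge0 //.
  by apply: le_trans hg.
have ndp' : 0 < nd by rewrite lt_def ndp nd0.
have hnd : nd <= 2 * na.
  rewrite -(ler_pM2l ndp'); move: key; rewrite -edd expr2; nra.
have hlnd : l * nd <= G.
  rewrite -(ler_pM2r ndp'); move: Pxl; rewrite -edd expr2.
  have : ng * nd <= G * nd by rewrite ler_pM2r.
  lra.
have -> : l * nd ^+ 2 = (l * nd) * nd by rewrite expr2 mulrA.
have -> : 2 * G * na = G * (2 * na) by ring.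
apply: ler_pM.
- by rewrite mulr_ge0 // ltW.
- exact: nd0.
- exact: hlnd.
- exact: hnd.
Qed.

Lemma telesc (h : nat -> R) (T : nat) :
  \sum_(1 <= t < T.+1) h t.-1 + h T = \sum_(1 <= t < T.+1) h t + h 0%N.
Proof.
elim: T => [|T IH]; first by rewrite !big_geq // add0r.
rewrite big_nat_recr //= [in RHS]big_nat_recr //= IH.
by rewrite -!addrA [h 0%N + _]addrC.
Qed.

Lemma main_thm (X : set V)
  (alpha l G beta LT : R) (x0 : V) (T : nat) :
  X !=set0 -> compact X -> convex_set X ->
  0 < alpha -> alpha <= l -> 0 < G -> 0 <= beta ->
  X x0 -> (1 <= T)%N ->
  0 <= LT -> LT <= diam X * T%:R ->
  forall f : nat -> V -> R,
    (forall t, (1 <= t <= T)%N -> in_class X alpha l G (f t)) ->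
    path_length X x0 f T <= LT ->
    forall y : nat -> V,
      y 0%N = x0 -> (forall t, (1 <= t <= T)%N -> X (y t)) ->
      cost beta f T (ogd X (l^-1) x0 f) - cost beta f T y
        <= (beta / l + 1) * (G / (1 - Num.sqrt (1 - alpha / l))) * LT.
Proof.
move=> X0 cX cvX a0 al G0 b0 Xx0 T1 LT0 _ f hf hP y y0 Xy.
have l0 : 0 < l by apply: lt_le_trans al.
set x := ogd X l^-1 x0 f.
set th := theta X x0 f.
set k := Num.sqrt (1 - alpha / l).
pose e t := enorm (x t - th t).
have k1 : k < 1.
  rewrite /k -[X in _ < X]sqrtr1 ltr_sqrt //; have : 0 < alpha / l by apply: divr_gt0.
  lra.
have k0 : 0 <= k by apply: sqrtr_ge0.
have Xx : forall t, X (x t).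
  case=> [|[|s]] //; rewrite /x /=.
  exact: (proj_min _ X0 cX).1.
have e0 : e 0%N = 0 by rewrite /e /x /th /= subrr enorm0.
have ege0 : forall t, 0 <= e t by move=> t; apply: enorm_ge0.
have A : forall t, (1 <= t <= T)%N -> e t <= k * e t.-1 + enorm (th t - th t.-1).
  case=> [//|[|s]] /andP [_ hT].
    by rewrite e0 mulr0 add0r /e /x /th /= enormB.
  have hs : (1 <= s.+1 <= T)%N by rewrite /= ltnW.
  have [st _] := gd_step (x s.+1) X0 cX cvX a0 al (hf _ hs) (Xx s.+1).
  rewrite /e /=.
  have -> : x s.+2 - th s.+2 = (x s.+2 - th s.+1) + (th s.+1 - th s.+2).
    by rewrite addrA subrK.
  apply: le_trans (enormD _ _) _.
  by rewrite [enorm (th s.+1 - _)]enormB lerD2r; exact: st.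
have thS : forall t, th t.+1 = argmin X (f t.+1) by [].
have Bnd : forall t, (1 <= t <= T)%N ->
    (f t (x t) + beta / 2 * enorm (x t - x t.-1) ^+ 2)
    - (f t (y t) + beta / 2 * enorm (y t - y t.-1) ^+ 2)
    <= G * e t + beta * G / l * e t.-1.
  move=> t ht.
  have hft := hf _ ht.
  have [_ [ineq gb]] := hft.
  have fpart : f t (x t) - f t (y t) <= G * e t.
    case: t ht hft ineq gb => [//|t] ht hft ineq gb.
    have [Xth thmin] := argmin_spec X0 cX (cont_of_class hft).
    have m1 := thmin _ (Xy _ ht).
    have C := (ineq (x t.+1) (th t.+1)).1.
    rewrite thS in C.
    have cs := CS (grad (f t.+1) (x t.+1)) (x t.+1 - argmin X (f t.+1)).
    have gb' := gb _ (Xx t.+1).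
    have ea : argmin X (f t.+1) - x t.+1 = - (x t.+1 - argmin X (f t.+1)) by rewrite opprB.
    rewrite ea dotpNr in C.
    have : 0 <= alpha / 2 * enorm (- (x t.+1 - argmin X (f t.+1))) ^+ 2.
      by rewrite mulr_ge0 // ?sqr_ge0 // divr_ge0 // ltW.
    have : enorm (grad (f t.+1) (x t.+1)) * enorm (x t.+1 - argmin X (f t.+1))
       <= G * e t.+1 by rewrite /e thS; apply: ler_wpM2r => //; exact: enorm_ge0.
    rewrite /e thS.
    lra.
  have spart : beta / 2 * enorm (x t - x t.-1) ^+ 2 <= beta * G / l * e t.-1.
    case: t ht {hft ineq gb fpart} => [//|[|s]] ht.
      by rewrite /x /= subrr enorm0 expr0n /= !mulr0 e0 mulr0.
    have hs : (1 <= s.+1 <= T)%N by rewrite /= ltnW //; case/andP: ht.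
    have [_ st] := gd_step (x s.+1) X0 cX cvX a0 al (hf _ hs) (Xx s.+1).
    rewrite /=.
    have -> : beta * G / l * e s.+1 = beta / 2 * (2 * G / l * e s.+1).
      by field; rewrite ?gt_eqF.
    by rewrite ler_wpM2l // ?divr_ge0 //; exact: st.
  have : 0 <= beta / 2 * enorm (y t - y t.-1) ^+ 2.
    by rewrite mulr_ge0 // ?sqr_ge0 // divr_ge0.
  lra.
pose S := \sum_(1 <= t < T.+1) e t.
pose S' := \sum_(1 <= t < T.+1) e t.-1.
have SS' : S' <= S.
  have := telesc e T; rewrite e0 addr0 -/S -/S' => h.
  have := ege0 T; lra.
have S0 : 0 <= S by apply: sumr_ge0 => t _; exact: ege0.
have hA : S <= k * S' + path_length X x0 f T.
  rewrite /path_length /S /S' mulr_sumr -big_split /=.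
  by apply: ler_sum_nat => t ht; apply: A.
have hS : S * (1 - k) <= LT.
  have : k * S' <= k * S by rewrite ler_wpM2l.
  lra.
have k1' : 0 < 1 - k by rewrite subr_gt0.
have hcost : cost beta f T x - cost beta f T y <= G * S + beta * G / l * S'.
  rewrite /cost -sumrB /S /S' !mulr_sumr -big_split /=.
  by apply: ler_sum_nat => t ht; apply: Bnd.
apply: le_trans hcost _.
have c0 : 0 <= beta * G / l by rewrite divr_ge0 ?mulr_ge0 // ltW.
apply: (@le_trans _ _ ((G + beta * G / l) * S)).
  have := ler_wpM2l c0 SS'; lra.
have -> : (beta / l + 1) * (G / (1 - k)) * LT = (G + beta * G / l) * (LT / (1 - k)).
  by field; rewrite ?gt_eqF.
apply: ler_wpM2l; first by rewrite addr_ge0 // ltW.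
by rewrite ler_pdivlMr.
Qed.

End Basic.

Unset Implicit Arguments.

Theorem theorem1 (R : realType) (n : nat) (X : set 'rV[R]_n)
  (alpha l G beta LT : R) (x0 : 'rV[R]_n) (T : nat) :
  X !=set0 -> compact X -> convex_set X ->
  0 < alpha -> alpha <= l -> 0 < G -> 0 <= beta ->
  X x0 -> (1 <= T)%N ->
  0 <= LT -> LT <= diam X * T%:R ->
  forall f : nat -> 'rV[R]_n -> R,
    (forall t, (1 <= t <= T)%N -> in_class X alpha l G (f t)) ->
    path_length X x0 f T <= LT ->
    forall y : nat -> 'rV[R]_n,
      y 0%N = x0 -> (forall t, (1 <= t <= T)%N -> X (y t)) ->
      cost beta f T (ogd X (l^-1) x0 f) - cost beta f T y
        <= (beta / l + 1) * (G / (1 - Num.sqrt (1 - alpha / l))) * LT.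
Proof. exact: main_thm. Qed.
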